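(* For every LTOL formula $\varphi$ there is an alternating Büchi word automaton $A_\varphi$ over the alphabet $\Sigma\times\mathcal{O}$, where $\Sigma=2^{\mathcal{V}}$ and $\mathcal{O}=2^{\mathrm{obs}(\varphi)}$, such that $\bigcup_{w\in\mathcal{L}(A_\varphi)}\mathcal{L}(w)$ is exactly the set of computations satisfying $\varphi$.
   Context: Fix finite sets: $\mathcal{V}$ of Boolean state variables, $Ch$ of channels (containing $\star$), $D$ of Boolean data variables, $K$ of agent identities, $CV$ of Boolean common variables. An observation is $m=\langle ch,{\bf d},k,\pi\rangle$ with $ch\in Ch$, ${\bf d}$ an assignment to $D$, $k\in K$, and $\pi$ a set of assignments to $CV$; $M$ is the set of observations. Observation descriptors: $O::=cv\mid\neg cv\mid ch\mid\neg ch\mid k\mid\neg k\mid d\mid\neg d\mid\exists O\mid\forall O\mid O\vee O\mid O\wedge O$. Semantics for $m=\langle ch,{\bf d},k,\pi\rangle$: $m\models ch'$ iff $ch=ch'$; $m\models d'$ iff ${\bf d}(d')$ true; $m\models k'$ iff $k=k'$ (negations: the complements); $m\models cv$ iff every $c\in\pi$ satisfies $cv$; $m\models\neg cv$ iff some $c\in\pi$ falsifies $cv$; $m\models\exists O$ iff some $c\in\pi$ has $\langle ch,{\bf d},k,\{c\}\rangle\models O$; $m\models\forall O$ iff all $c\in\pi$ have $\langle ch,{\bf d},k,\{c\}\rangle\models O$; $\vee,\wedge$ as usual. LTOL formulas: $\phi::=v\mid\neg v\mid\phi\vee\phi\mid\phi\wedge\phi\mid\phi\,\mathcal{U}\,\phi\mid\phi\,\mathcal{R}\,\phi\mid\langle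 O\rangle\phi\mid[O]\phi$ with $v\in\mathcal{V}$. A computation is $\rho:\mathbb{N}\to 2^{\mathcal{V}}\times M$, $\rho(i)=(s_i,m_i)$; $\rho_{\geq i}$ is the suffix. $\rho_{\geq i}\models v$ iff $v\in s_i$; Boolean connectives, $\mathcal{U}$ and $\mathcal{R}$ as in LTL; $\rho_{\geq i}\models\langle O\rangle\phi$ iff $m_i\models O$ and $\rho_{\geq i+1}\models\phi$; $\rho_{\geq i}\models[O]\phi$ iff $m_i\models O$ implies $\rho_{\geq i+1}\models\phi$. $\rho$ satisfies $\varphi$ iff $\rho_{\geq0}\models\varphi$. $\mathrm{obs}(\varphi)$ is the set of descriptors $O$ such that $\langle O\rangle\psi$ or $[O]\psi$ is a subformula of $\varphi$. For a word $w=(\sigma_0,\varpi_0)(\sigma_1,\varpi_1)\dots\in(\Sigma\times\mathcal{O})^\omega$, a computation $\rho$ satisfies $w$ if for all $i$, $s_i=\sigma_i$ and for every $O\in\mathrm{obs}(\varphi)$, $m_i\models O$ iff $O\in\varpi_i$; $\mathcal{L}(w)$ is the set of computations satisfying $w$. An alternating Büchi word automaton over alphabet $\Gamma$ is $\langle\Gamma,Q,q_{in},\delta,F\rangle$ with $\delta:Q\times\Gamma\to\mathcal{B}^+(Q)$ (positive Boolean formulas over $Q$, including true/false); it accepts a word if there is a run tree (root labelled $q_{in}$, children of a node at depth $j$ labelled $q$ form a set satisfying $\delta(q,\text{$j$-th letter})$) all of whose infinite paths visit $F$ infinitely often. $\mathcal{L}(A)$ is the set of accepted words. *)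

(* Defs.v *)
From HB Require Import structures.
From mathcomp Require Import all_boot.
Set Implicit Arguments. Unset Strict Implicit. Unset Printing Implicit Defensive.

Section LTOL.
(* Finite sets of state variables, channels, data variables, agent identities,
   common variables. *)
Variables (V Ch D K CV : finType).

Definition obsv : Type :=
  (Ch * {ffun D -> bool} * K * {set {ffun CV -> bool}})%type.

Inductive descr : Type :=
| OCv of CV | ONCv of CV
| OCh of Ch | ONCh of Ch
| OK of K   | ONK of K
| OD of D   | OND of D
| OEx of descr | OAll of descr
| OOr of descr & descr | OAnd of descr & descr.

Fixpoint msat (m : obsv) (O : descr) : bool :=
  let: (ch, d, k, pi) := m in
  match O with
  | OCv cv => [forall c in pi, c cv]
  | ONCv cv => [exists c in pi, ~~ c cv]
  | OCh ch' => ch == ch'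
  | ONCh ch' => ch != ch'
  | OK k' => k == k'
  | ONK k' => k != k'
  | OD d' => d d'
  | OND d' => ~~ d d'
  | OEx O1 => [exists c in pi, msat (ch, d, k, [set c]) O1]
  | OAll O1 => [forall c in pi, msat (ch, d, k, [set c]) O1]
  | OOr O1 O2 => msat m O1 || msat m O2
  | OAnd O1 O2 => msat m O1 && msat m O2
  end.

Local Notation leafT := (Ch + (D + (K + CV)))%type.

Fixpoint enc (O : descr) : GenTree.tree leafT :=
  match O with
  | OCv c => GenTree.Node 0 [:: GenTree.Leaf (inr (inr (inr c)))]
  | ONCv c => GenTree.Node 1 [:: GenTree.Leaf (inr (inr (inr c)))]
  | OCh c => GenTree.Node 2 [:: GenTree.Leaf (inl c)]
  | ONCh c => GenTree.Node 3 [:: GenTree.Leaf (inl c)]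
  | OK k => GenTree.Node 4 [:: GenTree.Leaf (inr (inr (inl k)))]
  | ONK k => GenTree.Node 5 [:: GenTree.Leaf (inr (inr (inl k)))]
  | OD d => GenTree.Node 6 [:: GenTree.Leaf (inr (inl d))]
  | OND d => GenTree.Node 7 [:: GenTree.Leaf (inr (inl d))]
  | OEx O1 => GenTree.Node 8 [:: enc O1]
  | OAll O1 => GenTree.Node 9 [:: enc O1]
  | OOr O1 O2 => GenTree.Node 10 [:: enc O1; enc O2]
  | OAnd O1 O2 => GenTree.Node 11 [:: enc O1; enc O2]
  end.

Fixpoint dec (t : GenTree.tree leafT) : option descr :=
  match t with
  | GenTree.Node 0 [:: GenTree.Leaf (inr (inr (inr c)))] => Some (OCv c)
  | GenTree.Node 1 [:: GenTree.Leaf (inr (inr (inr c)))] => Some (ONCv c)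
  | GenTree.Node 2 [:: GenTree.Leaf (inl c)] => Some (OCh c)
  | GenTree.Node 3 [:: GenTree.Leaf (inl c)] => Some (ONCh c)
  | GenTree.Node 4 [:: GenTree.Leaf (inr (inr (inl k)))] => Some (OK k)
  | GenTree.Node 5 [:: GenTree.Leaf (inr (inr (inl k)))] => Some (ONK k)
  | GenTree.Node 6 [:: GenTree.Leaf (inr (inl d))] => Some (OD d)
  | GenTree.Node 7 [:: GenTree.Leaf (inr (inl d))] => Some (OND d)
  | GenTree.Node 8 [:: t1] => omap OEx (dec t1)
  | GenTree.Node 9 [:: t1] => omap OAll (dec t1)
  | GenTree.Node 10 [:: t1; t2] =>
      match dec t1, dec t2 with Some a, Some b => Some (OOr a b) | _, _ => None end
  | GenTree.Node 11 [:: t1; t2] =>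
      match dec t1, dec t2 with Some a, Some b => Some (OAnd a b) | _, _ => None end
  | _ => None
  end.

Lemma encK : pcancel enc dec.
Proof. by elim=> //= [O1 -> | O1 -> | O1 -> O2 -> | O1 -> O2 ->]. Qed.

End LTOL.

HB.instance Definition _ (Ch D K CV : finType) :=
  Countable.copy (descr Ch D K CV) (pcan_type (@encK Ch D K CV)).

Section LTOL2.
Variables (V Ch D K CV : finType).
Local Notation descr := (descr Ch D K CV).
Local Notation obsv := (obsv Ch D K CV).

Inductive ltol : Type :=
| FVar of V | FNVar of V
| FOr of ltol & ltol | FAnd of ltol & ltol
| FUntil of ltol & ltol | FRelease of ltol & ltol
| FDiam of descr & ltol | FBox of descr & ltol.

Definition computation := nat -> ({set V} * obsv)%type.

Fixpoint sat (rho : computation) (i : nat) (phi : ltol) : Prop :=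
  match phi with
  | FVar v => v \in (rho i).1
  | FNVar v => v \notin (rho i).1
  | FOr p q => sat rho i p \/ sat rho i q
  | FAnd p q => sat rho i p /\ sat rho i q
  | FUntil p q => exists j, i <= j /\ sat rho j q /\
                    forall k, i <= k -> k < j -> sat rho k p
  | FRelease p q => forall j, i <= j ->
                    sat rho j q \/ exists k, i <= k /\ k < j /\ sat rho k p
  | FDiam o p => msat (rho i).2 o /\ sat rho i.+1 p
  | FBox o p => msat (rho i).2 o -> sat rho i.+1 p
  end.

Definition satisfies (rho : computation) (phi : ltol) : Prop := sat rho 0 phi.

Fixpoint obs (phi : ltol) : seq descr :=
  match phi with
  | FVar _ | FNVar _ => [::]
  | FOr p q | FAnd p q | FUntil p q | FRelease p q => obs p ++ obs q
  | FDiam o p | FBox o p => o :: obs p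
  end.

Definition letter (phi : ltol) : Type :=
  ({set V} * {set seq_sub (obs phi)})%type.

Definition word (phi : ltol) := nat -> letter phi.

Definition sat_word (phi : ltol) (w : word phi) (rho : computation) : Prop :=
  forall i, (rho i).1 = (w i).1 /\
    forall o : seq_sub (obs phi), msat (rho i).2 (val o) = (o \in (w i).2).

End LTOL2.

Inductive pbf (Q : Type) : Type :=
| BTrue | BFalse | BAtom of Q | BAnd of pbf Q & pbf Q | BOr of pbf Q & pbf Q.
Arguments BTrue {Q}. Arguments BFalse {Q}.

Fixpoint pbf_sat (Q : Type) (S : Q -> Prop) (f : pbf Q) : Prop :=
  match f with
  | BTrue => True
  | BFalse => False
  | BAtom q => S q
  | BAnd f1 f2 => pbf_sat S f1 /\ pbf_sat S f2
  | BOr f1 f2 => pbf_sat S f1 \/ pbf_sat S f2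
  end.

Record ABW (Gamma : Type) := {
  abw_state : finType;
  abw_init : abw_state;
  abw_delta : abw_state -> Gamma -> pbf abw_state;
  abw_final : {set abw_state}
}.
Arguments abw_state {Gamma} a.
Arguments abw_init {Gamma} a.
Arguments abw_delta {Gamma} a _ _.
Arguments abw_final {Gamma} a.

(* A run tree: nodes are addresses x : seq nat in a prefix-closed set T,
   labelled by lab; node x has depth size x. *)
Definition run_tree (Gamma : Type) (A : ABW Gamma) (w : nat -> Gamma)
    (T : seq nat -> Prop) (lab : seq nat -> abw_state A) : Prop :=
  T [::] /\ lab [::] = abw_init A /\
  (forall x c, T (rcons x c) -> T x) /\
  (forall x, T x ->
     pbf_sat (fun q => exists c, T (rcons x c) /\ lab (rcons x c) = q)
             (abw_delta A (lab x) (w (size x)))).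

Arguments run_tree {Gamma} A w T lab.

Definition inf_path (T : seq nat -> Prop) (p : nat -> seq nat) : Prop :=
  p 0 = [::] /\ forall n, T (p n) /\ exists c, p n.+1 = rcons (p n) c.

Definition accepts (Gamma : Type) (A : ABW Gamma) (w : nat -> Gamma) : Prop :=
  exists T lab, run_tree A w T lab /\
    forall p, inf_path T p ->
      forall n, exists m, n <= m /\ lab (p m) \in abw_final A.
Arguments accepts {Gamma} A w.

(* Main.v *)
Require Import Defs.
From HB Require Import structures.
From mathcomp Require Import all_boot.
From Stdlib Require Import Classical ClassicalEpsilon.
From mathcomp Require Import zify.
Set Implicit Arguments. Unset Strict Implicit. Unset Printing Implicit Defensive.

Section Enc.
Variables (V Ch D K CV : finType).
Local Notation F := (ltol V Ch D K CV).
Local Notation dsc := (descr Ch D K CV).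
Fixpoint fenc (f : F) : GenTree.tree (V + dsc) :=
  match f with
  | FVar v => GenTree.Node 0 [:: GenTree.Leaf (inl v)]
  | FNVar v => GenTree.Node 1 [:: GenTree.Leaf (inl v)]
  | FOr p q => GenTree.Node 2 [:: fenc p; fenc q]
  | FAnd p q => GenTree.Node 3 [:: fenc p; fenc q]
  | FUntil p q => GenTree.Node 4 [:: fenc p; fenc q]
  | FRelease p q => GenTree.Node 5 [:: fenc p; fenc q]
  | FDiam o p => GenTree.Node 6 [:: GenTree.Leaf (inr o); fenc p]
  | FBox o p => GenTree.Node 7 [:: GenTree.Leaf (inr o); fenc p]
  end.
Fixpoint fdec (t : GenTree.tree (V + dsc)) : option F :=
  match t with
  | GenTree.Node 0 [:: GenTree.Leaf (inl v)] => Some (FVar _ _ _ _ v)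
  | GenTree.Node 1 [:: GenTree.Leaf (inl v)] => Some (FNVar _ _ _ _ v)
  | GenTree.Node 2 [:: t1; t2] =>
      match fdec t1, fdec t2 with Some a, Some b => Some (FOr a b) | _, _ => None end
  | GenTree.Node 3 [:: t1; t2] =>
      match fdec t1, fdec t2 with Some a, Some b => Some (FAnd a b) | _, _ => None end
  | GenTree.Node 4 [:: t1; t2] =>
      match fdec t1, fdec t2 with Some a, Some b => Some (FUntil a b) | _, _ => None end
  | GenTree.Node 5 [:: t1; t2] =>
      match fdec t1, fdec t2 with Some a, Some b => Some (FRelease a b) | _, _ => None end
  | GenTree.Node 6 [:: GenTree.Leaf (inr o); t1] => omap (FDiam o) (fdec t1)
  | GenTree.Node 7 [:: GenTree.Leaf (inr o); t1] => omap (FBox o) (fdec t1)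
  | _ => None
  end.
Lemma fencK : pcancel fenc fdec.
Proof. by elim=> //= [p -> q -> | p -> q -> | p -> q -> | p -> q -> | o p -> | o p ->]. Qed.
End Enc.

HB.instance Definition _ (V Ch D K CV : finType) :=
  Countable.copy (ltol V Ch D K CV) (pcan_type (@fencK V Ch D K CV)).

Section Proof.
Variables (V Ch D K CV : finType) (phi : ltol V Ch D K CV).
Local Notation F := (ltol V Ch D K CV).
Local Notation dsc := (descr Ch D K CV).

Fixpoint subf (f : F) : seq F := f :: match f with
  | FOr p q | FAnd p q | FUntil p q | FRelease p q => subf p ++ subf q
  | FDiam _ p | FBox _ p => subf p
  | _ => [::] end.

Lemma subf_self (f : F) : f \in subf f.
Proof. by case: f => *; rewrite /= mem_head. Qed.
Definition S := seq_sub (subf phi).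
Definition s0 : S := SeqSub (subf_self phi).
Definition atm (f : F) : pbf S := BAtom (insubd s0 f).
Definition ochk (o : dsc) (a : letter phi) : bool :=
  [exists x : seq_sub (obs phi), (x \in a.2) && (val x == o)].
Fixpoint tr (f : F) (a : letter phi) : pbf S :=
  match f with
  | FVar v => if v \in a.1 then BTrue else BFalse
  | FNVar v => if v \in a.1 then BFalse else BTrue
  | FOr p q => BOr (tr p a) (tr q a)
  | FAnd p q => BAnd (tr p a) (tr q a)
  | FUntil p q => BOr (tr q a) (BAnd (tr p a) (atm (FUntil p q)))
  | FRelease p q => BAnd (tr q a) (BOr (tr p a) (atm (FRelease p q)))
  | FDiam o p => if ochk o a then atm p else BFalse
  | FBox o p => if ochk o a then atm p else BTrue
  end.
Definition isU (f : F) := if f is FUntil _ _ then true else false.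
Definition Aut : ABW (letter phi) :=
  {| abw_state := S; abw_init := s0; abw_delta := fun s a => tr (val s) a;
     abw_final := [set s : S | ~~ isU (val s)] |}.


Lemma subf_trans f g h : g \in subf f -> h \in subf g -> h \in subf f.
Proof.
elim: f g h => [v|v|p IHp q IHq|p IHp q IHq|p IHp q IHq|p IHp q IHq|o p IHp|o p IHp] g h /=;
  rewrite ?in_cons ?mem_cat ?in_nil ?orbF;
  try (by move=> /eqP -> /=; rewrite ?in_cons ?mem_cat ?in_nil ?orbF);
  case/orP=> [/eqP -> /= | ]; rewrite ?in_cons ?mem_cat //.
- by case/orP=> [H1 H2|H1 H2]; [rewrite (IHp _ _ H1 H2) /= ?orbT | rewrite (IHq _ _ H1 H2) /= ?orbT].
- by case/orP=> [H1 H2|H1 H2]; [rewrite (IHp _ _ H1 H2) /= ?orbT | rewrite (IHq _ _ H1 H2) /= ?orbT].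
- by case/orP=> [H1 H2|H1 H2]; [rewrite (IHp _ _ H1 H2) /= ?orbT | rewrite (IHq _ _ H1 H2) /= ?orbT].
- by case/orP=> [H1 H2|H1 H2]; [rewrite (IHp _ _ H1 H2) /= ?orbT | rewrite (IHq _ _ H1 H2) /= ?orbT].
- by move=> H1 H2; rewrite (IHp _ _ H1 H2) orbT.
- by move=> H1 H2; rewrite (IHp _ _ H1 H2) orbT.
Qed.

Lemma obs_sub f g o : g \in subf f -> o \in obs g -> o \in obs f.
Proof.
elim: f g => [v|v|p IHp q IHq|p IHp q IHq|p IHp q IHq|p IHp q IHq|o' p IHp|o' p IHp] g /=;
  rewrite ?in_cons ?mem_cat ?in_nil ?orbF;
  try (by move=> /eqP ->);
  (case/orP; first by move=> /eqP -> /=; rewrite ?mem_cat ?in_cons).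
- by case/orP=> [H1 H2|H1 H2]; [rewrite (IHp _ H1 H2) /= ?orbT | rewrite (IHq _ H1 H2) /= ?orbT].
- by case/orP=> [H1 H2|H1 H2]; [rewrite (IHp _ H1 H2) /= ?orbT | rewrite (IHq _ H1 H2) /= ?orbT].
- by case/orP=> [H1 H2|H1 H2]; [rewrite (IHp _ H1 H2) /= ?orbT | rewrite (IHq _ H1 H2) /= ?orbT].
- by case/orP=> [H1 H2|H1 H2]; [rewrite (IHp _ H1 H2) /= ?orbT | rewrite (IHq _ H1 H2) /= ?orbT].
- by move=> H1 H2; rewrite (IHp _ H1 H2) orbT.
- by move=> H1 H2; rewrite (IHp _ H1 H2) orbT.
Qed.

Lemma sub2 (C : F -> F -> F) p q :
  (forall f, f \in subf (C p q) = (f == C p q) || (f \in subf p ++ subf q)) ->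
  C p q \in subf phi -> p \in subf phi /\ q \in subf phi.
Proof.
move=> E H; split; apply: (subf_trans H); rewrite E mem_cat subf_self ?orbT //.
Qed.

Lemma sub1 o (C : dsc -> F -> F) p :
  (forall f, f \in subf (C o p) = (f == C o p) || (f \in subf p)) ->
  C o p \in subf phi -> p \in subf phi.
Proof. by move=> E H; apply: (subf_trans H); rewrite E subf_self orbT. Qed.

Lemma atmK f : f \in subf phi -> val (insubd s0 f) = f.
Proof. by move=> H; rewrite insubdK. Qed.

Lemma ochkE (w : word phi) (rho : computation V Ch D K CV) i o :
  sat_word w rho -> o \in obs phi -> ochk o (w i) = msat (rho i).2 o.
Proof.
move=> hw Ho; have [_ H] := hw i; apply/idP/idP.
- by case/existsP=> x /andP[Hx /eqP <-]; rewrite H.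
- move=> Hm; apply/existsP; exists (SeqSub Ho); rewrite /= eqxx andbT -H //.
Qed.

Section Sem.
Variable rho : computation V Ch D K CV.
Local Notation sat := (sat rho).

Lemma until_unfold p q i : sat i (FUntil p q) -> ~ sat i q ->
  sat i p /\ sat i.+1 (FUntil p q).
Proof.
move=> [j [Hij [Hq Hp]]] Hn.
have Hj : i < j by rewrite ltn_neqAle Hij andbT; apply/eqP=> E; subst j.
split; first by apply: Hp.
exists j; split=> //; split=> // k Hk Hkj; apply: Hp => //; exact: ltnW.
Qed.

Lemma until_fold p q i : sat i q \/ (sat i p /\ sat i.+1 (FUntil p q)) ->
  sat i (FUntil p q).
Proof.
case=> [Hq | [Hp [j [Hij [Hq H]]]]]; first by exists i; split=> //; split=> // k H1 H2; exfalso; move: H2; rewrite ltnNge H1.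
exists j; split; first exact: ltnW. split=> // k H1 H2.
case: (ltngtP i k) H1 => // [Hk | <-] _ //; exact: H.
Qed.

Lemma release_unfold p q i : sat i (FRelease p q) ->
  sat i q /\ (sat i p \/ sat i.+1 (FRelease p q)).
Proof.
move=> H; split.
- case: (H i (leqnn i)) => // [[k [H1 [H2 _]]]]; exfalso; move: H2; by rewrite ltnNge H1.
- case: (classic (sat i p)) => Hp; [by left | right].
  move=> j Hj; case: (H j (ltnW Hj)) => [|[k [H1 [H2 H3]]]]; [by left | right].
  exists k; split=> //; rewrite ltn_neqAle H1 andbT; apply/eqP=> E; subst k; exact: Hp.
Qed.

Lemma release_coind p q (P : nat -> Prop) :
  (forall i, P i -> sat i q /\ (sat i p \/ P i.+1)) -> forall i, P i -> sat i (FRelease p q).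
Proof.
move=> HP.
have Kd : forall d i, P i -> sat (i + d) q \/ exists k, i <= k /\ k < i + d /\ sat k p.
  elim=> [|d IH] i Hi; first by left; rewrite addn0; case: (HP i Hi).
  case: (HP i Hi) => _ [Hp | Hn]; first by right; exists i; rewrite leqnn addnS ltnS leq_addr.
  case: (IH _ Hn) => [H | [k [H1 [H2 H3]]]]; [left; by rewrite addnS -addSn | right].
  by exists k; split; [exact: ltnW | split; rewrite // addnS -addSn].
move=> i Hi j Hj; have := Kd (j - i) i Hi; by rewrite subnKC.
Qed.
End Sem.

Section Sound.
Variables (rho : computation V Ch D K CV) (w : word phi) (T : seq nat -> Prop) (lab : seq nat -> S).
Hypothesis hw : sat_word w rho.
Hypothesis rt : run_tree Aut w T lab.
Hypothesis acc : forall p, inf_path T p -> forall n, exists m, n <= m /\ lab (p m) \in abw_final Aut.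

Definition Chl x q := exists c, T (rcons x c) /\ lab (rcons x c) = q.

Lemma rtP x : T x -> pbf_sat (Chl x) (tr (val (lab x)) (w (size x))).
Proof. by case: rt => _ [_ [_ H]] /H. Qed.

Lemma T_pre y c : T (rcons y c) -> T y.
Proof. by case: rt => _ [_ [H _]]; apply: H. Qed.

Lemma T_take y n : T y -> T (take n y).
Proof.
elim/last_ind: y n => [|y c IH] n Hy; first by case: n.
have Hy' := T_pre Hy.
rewrite -cats1 take_cat; case: ifP => _; first exact: IH.
by case: (n - size y) => [|k] /=; rewrite ?cats0 ?cats1.
Qed.

Lemma no_bad (R : seq nat -> Prop) : (forall y, R y -> T y) ->
  (forall y, R y -> exists c, R (rcons y c)) ->
  (forall y, R y -> lab y \notin abw_final Aut) -> forall y, ~ R y.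
Proof.
move=> RT Rs RF y0 Hy0.
pose nxt y := rcons y (epsilon (inhabits 0) (fun c => R (rcons y c))).
have Hn : forall y, R y -> R (nxt y).
  by move=> y Hy; apply: (epsilon_spec (inhabits 0) (fun c => R (rcons y c))); exact: Rs.
have Hi : forall k, R (iter k nxt y0) by elim=> //= k IH; exact: Hn.
pose pth n := if n <= size y0 then take n y0 else iter (n - size y0) nxt y0.
have Hpl : forall m, size y0 <= m -> pth m = iter (m - size y0) nxt y0.
  move=> m Hm; rewrite /pth; case: leqP => // H.
  have -> : m = size y0 by apply/eqP; rewrite eqn_leq H Hm.
  by rewrite subnn take_size.
have Hp : inf_path T pth.
  split; first by rewrite /pth leq0n take0.
  move=> n; split.
  - rewrite /pth; case: leqP => _; [apply: T_take; exact: RT | exact: RT (Hi _)].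
  - case: (ltnP n (size y0)) => Hn0.
    + exists (nth 0 y0 n); rewrite /pth Hn0 ltnW //.
      exact: take_nth.
    + rewrite !Hpl ?(leq_trans Hn0) // subSn //=; by eexists.
have [m [Hm Hf]] := acc Hp (size y0).
by move: (RF _ (Hi (m - size y0))); rewrite -Hpl // Hf.
Qed.

Lemma Q f : f \in subf phi -> forall x, T x ->
  pbf_sat (Chl x) (tr f (w (size x))) -> sat rho (size x) f.
Proof.
elim: f => [v|v|p IHp q IHq|p IHp q IHq|p IHp q IHq|p IHp q IHq|o p IHp|o p IHp] Hf x Tx /=.
- by have [-> _] := hw (size x); case: ifP.
- by have [-> _] := hw (size x); case: ifP => // ->.
- have [Hp Hq] := sub2 (C := @FOr V Ch D K CV) (fun g => in_cons _ _ _) Hf.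
  by case=> H; [left; exact: IHp | right; exact: IHq].
- have [Hp Hq] := sub2 (C := @FAnd V Ch D K CV) (fun g => in_cons _ _ _) Hf.
  by case=> H1 H2; split; [exact: IHp | exact: IHq].
- have [Hp Hq] := sub2 (C := @FUntil V Ch D K CV) (fun g => in_cons _ _ _) Hf.
  have step : forall y, T y -> pbf_sat (Chl y) (tr (FUntil p q) (w (size y))) ->
      ~ sat rho (size y) (FUntil p q) ->
      exists c, T (rcons y c) /\ val (lab (rcons y c)) = FUntil p q /\
                ~ sat rho (size (rcons y c)) (FUntil p q).
    move=> y Ty /= [Hq' | [Hp' [c [Tc Lc]]]] Hn.
    + by exfalso; apply: Hn; apply: until_fold; left; exact: IHq.
    + exists c; rewrite Lc atmK // size_rcons; split=> //; split=> // Hs.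
      by apply: Hn; apply: until_fold; right; split=> //; exact: IHp.
  move=> H; apply: NNPP => Hn.
  have [c [Tc [Lc Nc]]] := step x Tx H Hn.
  pose R y := T y /\ val (lab y) = FUntil p q /\ ~ sat rho (size y) (FUntil p q).
  suff : ~ R (rcons x c) by apply.
  apply: no_bad.
  + by move=> y [].
  + move=> y [Ty [Ly Ny]]; have := rtP Ty; rewrite Ly => H'.
    by have [c' [? [? ?]]] := step y Ty H' Ny; exists c'.
  + by move=> y [_ [Ly _]]; rewrite inE Ly.
- have [Hp Hq] := sub2 (C := @FRelease V Ch D K CV) (fun g => in_cons _ _ _) Hf.
  move=> H.
  apply: (@release_coind _ _ _ (fun i => exists y, T y /\ size y = i /\
     pbf_sat (Chl y) (tr (FRelease p q) (w (size y))))); last by exists x.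
  move=> i [y [Ty [<- [H1 H2]]]]; split; first exact: IHq.
  case: H2 => [H2 | [c [Tc Lc]]]; first by left; exact: IHp.
  right; exists (rcons y c); rewrite size_rcons; split=> //; split=> //.
  by have := rtP Tc; rewrite Lc atmK // size_rcons.
- have Hp := sub1 (C := @FDiam V Ch D K CV) (fun g => in_cons _ _ _) Hf.
  have Ho : o \in obs phi by apply: (obs_sub Hf); rewrite /= mem_head.
  case: ifP => // Hc [c [Tc Lc]]; split; first by rewrite -(ochkE _ hw Ho).
  have := IHp Hp _ Tc; rewrite size_rcons; apply.
  by have := rtP Tc; rewrite Lc atmK // size_rcons.
- have Hp := sub1 (C := @FBox V Ch D K CV) (fun g => in_cons _ _ _) Hf.
  have Ho : o \in obs phi by apply: (obs_sub Hf); rewrite /= mem_head.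
  case: ifP => Hc.
  + move=> [c [Tc Lc]] _; have := IHp Hp _ Tc; rewrite size_rcons; apply.
    by have := rtP Tc; rewrite Lc atmK // size_rcons.
  + by move=> _ Hm; move: Hc; rewrite (ochkE _ hw Ho) Hm.
Qed.

Lemma soundness : sat rho 0 phi.
Proof.
case: rt => T0 [L0 _].
have := Q (subf_self phi) T0; apply.
by have := rtP T0; rewrite L0.
Qed.
End Sound.

Lemma pbf_mono (Q : Type) (S1 S2 : Q -> Prop) (f : pbf Q) :
  (forall q, S1 q -> S2 q) -> pbf_sat S1 f -> pbf_sat S2 f.
Proof.
move=> H; elim: f => [| |q|f1 IH1 f2 IH2|f1 IH1 f2 IH2] //=; first exact: H.
- by case=> ? ?; split; auto.
- by case=> ?; [left | right]; auto.
Qed.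

Fixpoint fsize (f : F) : nat :=
  match f with
  | FOr p q | FAnd p q | FUntil p q | FRelease p q => (fsize p + fsize q).+1
  | FDiam _ p | FBox _ p => (fsize p).+1
  | _ => 1 end.

Lemma fsize_pos f : 0 < fsize f. Proof. by case: f. Qed.

Section Compl.
Variable rho : computation V Ch D K CV.
Hypothesis Hphi : sat rho 0 phi.

Definition wr : word phi :=
  fun i => ((rho i).1, [set o : seq_sub (obs phi) | msat (rho i).2 (val o)]).
Lemma wr_ok : sat_word wr rho.
Proof. by move=> i; split=> // o; rewrite inE. Qed.

Fixpoint inreq (i : nat) (f : F) (s : S) : Prop :=
 match f with
 | FVar _ | FNVar _ => False
 | FOr p q => (sat rho i p /\ inreq i p s) \/ (~ sat rho i p /\ inreq i q s)
 | FAnd p q => inreq i p s \/ inreq i q s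
 | FUntil p q => (sat rho i q /\ inreq i q s) \/
                 (~ sat rho i q /\ (inreq i p s \/ val s = FUntil p q))
 | FRelease p q => inreq i q s \/ (sat rho i p /\ inreq i p s) \/
                   (~ sat rho i p /\ val s = FRelease p q)
 | FDiam o p => val s = p
 | FBox o p => msat (rho i).2 o /\ val s = p
 end.

Lemma req_sound f i s : sat rho i f -> inreq i f s -> sat rho i.+1 (val s).
Proof.
elim: f i s => [v|v|p IHp q IHq|p IHp q IHq|p IHp q IHq|p IHp q IHq|o p IHp|o p IHp] i s /=.
- by move=> _ [].
- by move=> _ [].
- move=> Hs [[Sp I]|[Np I]]; first exact: IHp Sp I.
  by case: Hs => [/Np []|Hq]; exact: IHq Hq I.
- by move=> [Hp Hq] [I|I]; [exact: IHp Hp I | exact: IHq Hq I].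
- move=> Hs [[Sq I]|[Nq [I| ->]]]; first exact: IHq Sq I.
  + exact: IHp (until_unfold Hs Nq).1 I.
  + exact: (until_unfold Hs Nq).2.
- move=> Hs; have [Sq Hor] := release_unfold Hs.
  case=> [I|[[Sp I]|[Np ->]]]; [exact: IHq Sq I | exact: IHp Sp I | by case: Hor].
- by move=> [_ Hp] ->.
- by move=> Hs [Hm ->]; exact: Hs Hm.
Qed.

Lemma req_complete f i : f \in subf phi -> sat rho i f ->
  pbf_sat (inreq i f) (tr f (wr i)).
Proof.
elim: f i => [v|v|p IHp q IHq|p IHp q IHq|p IHp q IHq|p IHp q IHq|o p IHp|o p IHp] i Hf /=.
- by rewrite /wr /= => ->.
- by rewrite /wr /= => /negbTE ->.
- have [Hp Hq] := sub2 (C := @FOr V Ch D K CV) (fun g => in_cons _ _ _) Hf.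
  case: (classic (sat rho i p)) => Sp H.
  + by left; apply: pbf_mono (IHp _ Hp Sp) => s I; left; split.
  + by case: H => // Sq; right; apply: pbf_mono (IHq _ Hq Sq) => s I; right; split.
- have [Hp Hq] := sub2 (C := @FAnd V Ch D K CV) (fun g => in_cons _ _ _) Hf.
  move=> [Sp Sq]; split.
  + by apply: pbf_mono (IHp _ Hp Sp) => s I; left.
  + by apply: pbf_mono (IHq _ Hq Sq) => s I; right.
- have [Hp Hq] := sub2 (C := @FUntil V Ch D K CV) (fun g => in_cons _ _ _) Hf.
  move=> H; case: (classic (sat rho i q)) => Sq.
  + by left; apply: pbf_mono (IHq _ Hq Sq) => s I; left.
  + have [Sp _] := until_unfold H Sq.
    right; split; first by apply: pbf_mono (IHp _ Hp Sp) => s I; right; split=> //; left.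
    by right; split=> //; right; rewrite atmK.
- have [Hp Hq] := sub2 (C := @FRelease V Ch D K CV) (fun g => in_cons _ _ _) Hf.
  move=> H; have [Sq _] := release_unfold H.
  split; first by apply: pbf_mono (IHq _ Hq Sq) => s I; left.
  case: (classic (sat rho i p)) => Sp.
  + by left; apply: pbf_mono (IHp _ Hp Sp) => s I; right; left.
  + by right; right; right; split=> //; rewrite atmK.
- have Hp := sub1 (C := @FDiam V Ch D K CV) (fun g => in_cons _ _ _) Hf.
  have Ho : o \in obs phi by apply: (obs_sub Hf); rewrite /= mem_head.
  by move=> [Hm _]; rewrite (ochkE _ wr_ok Ho) Hm /= atmK.
- have Hp := sub1 (C := @FBox V Ch D K CV) (fun g => in_cons _ _ _) Hf.
  have Ho : o \in obs phi by apply: (obs_sub Hf); rewrite /= mem_head.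
  rewrite (ochkE _ wr_ok Ho); case E: (msat _ _) => //= _.
  by split=> //; rewrite atmK.
Qed.

Definition st (c : nat) : S := nth s0 (enum (@predT S)) c.
Definition labr (y : seq nat) : S := last s0 (map st y).
Definition Tr (y : seq nat) : Prop :=
  forall k, k < size y -> inreq k (val (labr (take k y))) (st (nth 0 y k)).

Lemma labr_rcons y c : labr (rcons y c) = st c.
Proof. by rewrite /labr map_rcons last_rcons. Qed.

Lemma Tr_rcons y c : Tr (rcons y c) <-> Tr y /\ inreq (size y) (val (labr y)) (st c).
Proof.
rewrite /Tr size_rcons; split.
- move=> H; split.
  + move=> k Hk; have Hk' : k < (size y).+1 by rewrite ltnS ltnW.
    by have := H k Hk'; rewrite -cats1 take_cat Hk nth_cat Hk.
  + by have := H (size y) (ltnSn _); rewrite -cats1 take_cat ltnn subnn take0 cats0 nth_cat ltnn subnn.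
- move=> [H1 H2] k; rewrite ltnS leq_eqVlt => /orP[/eqP -> | Hk].
  + by rewrite -cats1 take_cat ltnn subnn take0 cats0 nth_cat ltnn subnn.
  + by rewrite -cats1 take_cat Hk nth_cat Hk; exact: H1.
Qed.

Lemma Tr_inv y : Tr y -> sat rho (size y) (val (labr y)).
Proof.
elim/last_ind: y => [|y c IH] H; first exact: Hphi.
move/Tr_rcons: H => [H1 H2]; rewrite labr_rcons size_rcons; exact: req_sound (IH H1) H2.
Qed.

Lemma rt_ok : run_tree Aut wr Tr labr.
Proof.
split; first by move=> k.
split; first by [].
split; first by move=> x c /Tr_rcons [].
move=> x Tx /=.
apply: (pbf_mono _ (req_complete (ssvalP (labr x)) (Tr_inv Tx))).
move=> q Hq; exists (index q (enum (@predT S))).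
have Eq : st (index q (enum (@predT S))) = q by rewrite /st nth_index ?mem_enum.
by rewrite labr_rcons Eq; split=> //; apply/Tr_rcons; rewrite Eq.
Qed.

Ltac fl := try (match goal with H : is_true (fsize (val ?s) < ?b) |- _ =>
   change (fsize (ssval s) < b) in H end); lia.

Lemma L1 i f s : inreq i f s -> fsize (ssval s) < fsize f \/ ssval s = f.
Proof.
elim: f i s => [v|v|p IHp q IHq|p IHp q IHq|p IHp q IHq|p IHp q IHq|o p IHp|o p IHp] i s //=.
- by case=> [[_ I]|[_ I]]; [case: (IHp _ _ I) => [H|->] | case: (IHq _ _ I) => [H|->]]; left; lia.
- by case=> I; [case: (IHp _ _ I) => [H|->] | case: (IHq _ _ I) => [H|->]]; left; lia.
- case=> [[_ I]|[_ [I| ->]]]; last by right.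
  + by case: (IHq _ _ I) => [H|->]; left; lia.
  + by case: (IHp _ _ I) => [H|->]; left; lia.
- case=> [I|[[_ I]|[_ ->]]]; last by right.
  + by case: (IHq _ _ I) => [H|->]; left; lia.
  + by case: (IHp _ _ I) => [H|->]; left; lia.
- by move=> ->; left.
- by move=> [_ ->]; left.
Qed.

Lemma L2 i p q s : inreq i (FUntil p q) s -> ssval s = FUntil p q -> ~ sat rho i q.
Proof.
move=> /= [[Sq I]|[Nq _]] E //.
case: (L1 I); rewrite E /= => H; first lia.
by have := f_equal fsize H => /=; lia.
Qed.

Definition gl (pt : nat -> seq nat) m := val (labr (pt m)).

Lemma acc_ok : forall pt, inf_path Tr pt ->
  forall n, exists m, n <= m /\ labr (pt m) \in abw_final Aut.
Proof.
move=> pt [P0 Hpt] n.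
have Hsz : forall m, size (pt m) = m.
  elim=> [|m IH]; first by rewrite P0.
  by have [_ [c ->]] := Hpt m; rewrite size_rcons IH.
have Hstep : forall m, inreq m (gl pt m) (labr (pt m.+1)).
  move=> m; have [_ [c E]] := Hpt m; have [T1 _] := Hpt m.+1.
  rewrite E in T1 *; move/Tr_rcons: T1 => [_].
  by rewrite Hsz labr_rcons.
have Hst2 : forall m, fsize (gl pt m.+1) < fsize (gl pt m) \/ gl pt m.+1 = gl pt m.
  by move=> m; exact: L1 (Hstep m).
have Hinv : forall m, sat rho m (gl pt m).
  by move=> m; rewrite /gl -{1}(Hsz m); apply: Tr_inv; exact: (Hpt m).1.
apply: NNPP => Hn.
have HU : forall m, n <= m -> isU (gl pt m).
  move=> m Hm; case E: (labr (pt m) \in abw_final Aut); first by exfalso; apply: Hn; exists m.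
  by move: E; rewrite inE /= => /negbFE.
have Hmono : forall m d, fsize (gl pt (m + d)) < fsize (gl pt m) \/ gl pt (m + d) = gl pt m.
  move=> m; elim=> [|d IH]; first by right; rewrite addn0.
  rewrite addnS; case: (Hst2 (m + d)) => H; case: IH => H'.
  + by left; lia.
  + by left; rewrite -H'.
  + by left; rewrite H.
  + by right; rewrite H H'.
have Hall : forall N m, n <= m -> fsize (gl pt m) <= N -> False.
  elim=> [|N IHN] m Hm HN.
  - by have := fsize_pos (gl pt m); lia.
  - case: (classic (exists d, gl pt (m + d) <> gl pt m)) => [[d Hd] | Hc].
    + case: (Hmono m d) => // H; apply: (IHN (m + d)); lia.
    + have Hc' : forall d, gl pt (m + d) = gl pt m.
        by move=> d; apply: NNPP => H; apply: Hc; exists d.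
      have := HU m Hm; case E: (gl pt m) => [| | | |a b| | |] //= _.
      have [j [Hj [Hb _]]] : sat rho m (FUntil a b) by rewrite -E; exact: Hinv m.
      have Ej : gl pt j = FUntil a b by rewrite -E -(subnKC Hj) Hc'.
      have Ej1 : gl pt j.+1 = FUntil a b by rewrite -E -(subnKC (leqW Hj)) Hc'.
      have := Hstep j; rewrite Ej => H; exact: L2 H Ej1 Hb.
exact: (Hall _ n (leqnn n) (leqnn _)).
Qed.
End Compl.
End Proof.

Theorem mainTheorem5 (V Ch D K CV : finType) (star : Ch) (phi : ltol V Ch D K CV) :
  exists A : ABW (letter phi),
    forall rho : computation V Ch D K CV,
      (exists w : word phi, accepts A w /\ sat_word w rho) <-> satisfies rho phi.
Proof.
exists (Aut phi) => rho; split.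
- move=> [w [[T [lab [rt acc]]] hw]]; exact: (soundness hw rt acc).
- move=> H; exists (wr phi rho); split; last exact: wr_ok.
  exists (Tr phi rho), (labr phi); split; [exact: rt_ok H | exact: acc_ok H].
Qed.
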